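(* Let $\mathbf{a}=(a_1,\dots,a_n)\in\mathbb{Z}_{\ge0}^n$ with $\mathbf{a}\ne\mathbf{0}$ and $a_1\ge\dots\ge a_n$, let $0<\beta<1$, $\epsilon>0$ and $c_2>0$ with $0<c_2\epsilon<1$, and suppose $1-\beta\ge\dfrac{c_2\epsilon}{n\|\mathbf{a}\|_1}$. If a real number $Z$ satisfies $$\mathrm{Vol}(Q_0\cap Q_1)\le Z\le\Big(1+\frac{c_2\epsilon^2}{2n}\Big)\mathrm{Vol}(Q_0\cap Q_1),$$ then $$(1-\epsilon)\Big(\frac{2^n}{n!}-\mathrm{Vol}(Q_1\cap Q_0)\Big)\le \frac{2^n}{n!}-Z\le \frac{2^n}{n!}-\mathrm{Vol}(Q_1\cap Q_0).$$
   Context: For $\mathbf{c}\in\mathbb{R}^n$, $r\ge 0$, $C(\mathbf{c},r)=\{\mathbf{x}\in\mathbb{R}^n:\|\mathbf{x}-\mathbf{c}\|_1\le r\}$. For $k=0,1,2,\dots$, $Q_k=C((1-\beta^k)\mathbf{a},\beta^k)$. *)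

(* Defs.v *)
From Stdlib Require Import Reals Lra Lia List ZArith.
Import ListNotations.
Open Scope R_scope.

(* Points of R^n are represented as functions nat -> R; only the
   coordinates 0..n-1 are relevant. *)
Definition pt := nat -> R.

Fixpoint rsum (n : nat) (f : nat -> R) : R :=
  match n with
  | O => 0
  | S m => rsum m f + f m
  end.

Definition l1norm (n : nat) (x : pt) : R := rsum n (fun i => Rabs (x i)).

Definition C (n : nat) (c : pt) (r : R) : pt -> Prop :=
  fun x => l1norm n (fun i => x i - c i) <= r.

Definition Q (n : nat) (a : nat -> nat) (beta : R) (k : nat) : pt -> Prop :=
  C n (fun i => (1 - beta ^ k) * INR (a i)) (beta ^ k).

Definition dcube (n k : nat) (z : list Z) : pt -> Prop :=
  fun x => forall i, (i < n)%nat ->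
    IZR (nth i z 0%Z) / 2 ^ k <= x i <= (IZR (nth i z 0%Z) + 1) / 2 ^ k.

Definition inner_vals (n : nat) (S : pt -> Prop) (v : R) : Prop :=
  exists (k : nat) (F : list (list Z)),
    NoDup F /\
    (forall z, In z F -> length z = n /\ forall x, dcube n k z x -> S x) /\
    v = INR (length F) / 2 ^ (k * n).

(* V is the (Jordan = Lebesgue, for the compact convex sets considered here)
   volume of S: the supremum of the inner dyadic approximations. *)
Definition is_volume (n : nat) (S : pt -> Prop) (V : R) : Prop :=
  is_lub (inner_vals n S) V.

(* Main.v *)
Require Import Defs.
From Stdlib Require Import Reals Lra Lia List ZArith.
Open Scope R_scope.

Lemma pow_diff (m : nat) (X Y : R) : 0 <= Y <= X ->
  INR (S m) * Y ^ m * (X - Y) <= X ^ S m - Y ^ S m.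
Proof.
  intros [HY HXY]. induction m as [|m IH].
  - simpl. lra.
  - change (X ^ S (S m)) with (X * X ^ S m). change (Y ^ S (S m)) with (Y * Y ^ S m).
    change (Y ^ S m) with (Y * Y ^ m) in *. change (X ^ S m) with (X * X ^ m) in *.
    set (A := Y ^ m) in *. set (B := X ^ m) in *.
    assert (H1 : 0 <= A) by (apply pow_le; lra).
    rewrite S_INR in *. assert (0 <= INR m) by apply pos_INR.
    assert (E1 : X * (X * B) - Y * (Y * A) = X * (X * B - Y * A) + Y * A * (X - Y)) by ring.
    rewrite E1. rewrite S_INR.
    assert (X * ((INR m + 1) * A * (X - Y)) <= X * (X * B - Y * A)) by (apply Rmult_le_compat_l; lra).
    assert (Y * ((INR m + 1) * A * (X - Y)) <= X * ((INR m + 1) * A * (X - Y))).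
    { apply Rmult_le_compat_r; [|lra]. apply Rmult_le_pos; [|lra]. apply Rmult_le_pos; lra. }
    replace ((INR m + 1 + 1) * (Y * A) * (X - Y)) with (Y * ((INR m + 1) * A * (X - Y)) + Y * A * (X - Y)) by ring.
    lra.
Qed.

Lemma rsum_shift (n : nat) (f : nat -> R) : rsum (S n) f = f 0%nat + rsum n (fun i => f (S i)).
Proof.
  induction n as [|n IH].
  - simpl. lra.
  - change (rsum (S (S n)) f) with (rsum (S n) f + f (S n)). rewrite IH. simpl. lra.
Qed.

Lemma rsum_nonneg (n : nat) (f : nat -> R) : (forall i, 0 <= f i) -> 0 <= rsum n f.
Proof. intros H. induction n; simpl; [lra | specialize (H n); lra]. Qed.

Lemma rsum_le_const (n : nat) (f : nat -> R) M : (forall i, (i < n)%nat -> f i <= M) -> rsum n f <= INR n * M.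
Proof.
  induction n as [|n IH]; intros H.
  - simpl; lra.
  - rewrite S_INR. simpl. assert (f n <= M) by (apply H; lia).
    assert (rsum n f <= INR n * M) by (apply IH; intros; apply H; lia). lra.
Qed.

Lemma rsum_ge_term (n : nat) (f : nat -> R) i : (forall j, 0 <= f j) -> (i < n)%nat -> f i <= rsum n f.
Proof.
  induction n as [|n IH]; intros H Hi; simpl; [lia|].
  destruct (Nat.eq_dec i n) as [->|Hne].
  - pose proof (rsum_nonneg n f H). lra.
  - assert (f i <= rsum n f) by (apply IH; auto; lia). specialize (H n). lra.
Qed.

Lemma l1norm_nonneg n x : 0 <= l1norm n x.
Proof. apply rsum_nonneg. intros; apply Rabs_pos. Qed.

Lemma l1norm_S n x : l1norm (S n) x = Rabs (x 0%nat) + l1norm n (fun i => x (S i)).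
Proof. unfold l1norm. rewrite rsum_shift. reflexivity. Qed.

Definition hdZ (z : list Z) : Z := match z with nil => 0%Z | t :: _ => t end.

Lemma heads_range (F : list (list Z)) : exists lo N, forall z, In z F -> (lo <= hdZ z < lo + Z.of_nat N)%Z.
Proof.
  induction F as [|z F [lo [N IH]]].
  - exists 0%Z, 0%nat. intros z [].
  - exists (Z.min lo (hdZ z)), (Z.to_nat (Z.max (lo + Z.of_nat N) (hdZ z + 1) - Z.min lo (hdZ z))).
    intros w [<-|Hw].
    + rewrite Z2Nat.id; lia.
    + specialize (IH w Hw). rewrite Z2Nat.id; lia.
Qed.

Lemma telescope (D : R) (g : Z -> R) (N : nat) : forall (F : list (list Z)) lo,
  NoDup F -> (forall z, In z F -> (lo <= hdZ z < lo + Z.of_nat N)%Z) ->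
  (forall t G, NoDup G -> (forall z, In z G -> In z F /\ hdZ z = t) ->
     INR (length G) / D <= g (t + 1)%Z - g t) ->
  INR (length F) / D <= g (lo + Z.of_nat N)%Z - g lo.
Proof.
  induction N as [|N IH]; intros F lo HF Hr Hg.
  - destruct F as [|z F].
    + simpl. rewrite Z.add_0_r. unfold Rdiv. lra.
    + specialize (Hr z (or_introl eq_refl)). simpl in Hr. lia.
  - set (p := fun z => Z.eqb (hdZ z) lo).
    rewrite <- (filter_length p F), plus_INR.
    assert (HA : INR (length (filter p F)) / D <= g (lo + 1)%Z - g lo).
    { apply Hg. apply NoDup_filter; auto.
      intros z Hz. apply filter_In in Hz as [Hz Hp]. split; auto. apply Z.eqb_eq. exact Hp. }
    assert (HB : INR (length (filter (fun x => negb (p x)) F)) / D <= g ((lo + 1) + Z.of_nat N)%Z - g (lo + 1)%Z).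
    { apply IH.
      - apply NoDup_filter; auto.
      - intros z Hz. apply filter_In in Hz as [Hz Hp]. specialize (Hr z Hz).
        unfold p in Hp. apply Bool.negb_true_iff in Hp. apply Z.eqb_neq in Hp. lia.
      - intros t G HG HGF. apply Hg; auto. intros z Hz. destruct (HGF z Hz) as [H1 H2].
        apply filter_In in H1 as [H1 _]. auto. }
    replace (lo + Z.of_nat (S N))%Z with ((lo + 1) + Z.of_nat N)%Z by lia.
    unfold Rdiv in *. lra.
Qed.

Definition psi (m : nat) (c r y : R) : R :=
  if Rle_dec y c then (Rmax (r - (c - y)) 0) ^ (S m)
  else 2 * r ^ (S m) - (Rmax (r - (y - c)) 0) ^ (S m).

Definition pp (m : nat) (x : R) : R := if Rle_dec 0 x then x ^ m else 0.

Lemma key m X Y rho : 0 <= rho <= Y -> Y <= X ->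
  (X - Y) * INR (S m) * rho ^ m <= X ^ S m - Y ^ S m.
Proof.
  intros H1 H2. pose proof (pow_diff m X Y ltac:(lra)).
  assert (rho ^ m <= Y ^ m) by (apply pow_incr; lra).
  assert (0 <= INR (S m)) by apply pos_INR.
  assert ((X - Y) * INR (S m) * rho ^ m <= (X - Y) * INR (S m) * Y ^ m).
  { apply Rmult_le_compat_l; [apply Rmult_le_pos; lra| lra]. }
  lra.
Qed.

Lemma abs_le x c : x <= c -> Rabs (x - c) = c - x.
Proof. intros. rewrite Rabs_minus_sym. apply Rabs_pos_eq. lra. Qed.
Lemma abs_ge x c : c <= x -> Rabs (x - c) = x - c.
Proof. intros. apply Rabs_pos_eq. lra. Qed.

Lemma Rmax_pos x : 0 <= x -> Rmax x 0 = x.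
Proof. intros. apply Rmax_left. lra. Qed.

Lemma Rmax_0_le x r : 0 <= r -> x <= r -> 0 <= Rmax x 0 <= r.
Proof. intros. split. apply Rmax_r. apply Rmax_lub; lra. Qed.

Lemma psi_bounds m c r y : 0 <= r -> 0 <= psi m c r y <= 2 * r ^ S m.
Proof.
  intros Hr. unfold psi. destruct (Rle_dec y c).
  - assert (H := Rmax_0_le (r - (c - y)) r Hr ltac:(lra)).
    assert (0 <= Rmax (r - (c - y)) 0 ^ S m) by (apply pow_le; lra).
    assert (Rmax (r - (c - y)) 0 ^ S m <= r ^ S m) by (apply pow_incr; lra).
    assert (0 <= r ^ S m) by (apply pow_le; lra). lra.
  - assert (H := Rmax_0_le (r - (y - c)) r Hr ltac:(lra)).
    assert (0 <= Rmax (r - (y - c)) 0 ^ S m) by (apply pow_le; lra).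
    assert (Rmax (r - (y - c)) 0 ^ S m <= r ^ S m) by (apply pow_incr; lra).
    lra.
Qed.

Lemma psi_mono m c r y y' : 0 <= r -> y <= y' -> psi m c r y <= psi m c r y'.
Proof.
  intros Hr Hy. unfold psi. destruct (Rle_dec y' c), (Rle_dec y c); try lra.
  - apply pow_incr. split. apply Rmax_r. apply Rmax_lub. 2: apply Rmax_r.
    apply Rle_trans with (r - (c - y')). lra. apply Rmax_l.
  - assert (H := Rmax_0_le (r - (c - y)) r Hr ltac:(lra)).
    assert (H' := Rmax_0_le (r - (y' - c)) r Hr ltac:(lra)).
    assert (Rmax (r - (c - y)) 0 ^ S m <= r ^ S m) by (apply pow_incr; lra).
    assert (Rmax (r - (y' - c)) 0 ^ S m <= r ^ S m) by (apply pow_incr; lra).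
    lra.
  - assert (Rmax (r - (y' - c)) 0 ^ S m <= Rmax (r - (y - c)) 0 ^ S m); [|lra].
    apply pow_incr. split. apply Rmax_r. apply Rmax_lub. 2: apply Rmax_r.
    apply Rle_trans with (r - (y - c)). lra. apply Rmax_l.
Qed.

Lemma tent_slab m c r a b rho : 0 <= r -> a <= b -> 0 <= rho ->
  rho <= r - Rabs (a - c) -> rho <= r - Rabs (b - c) ->
  (b - a) * INR (S m) * rho ^ m <= psi m c r b - psi m c r a.
Proof.
  intros Hr Hab H0 Ha Hb. unfold psi.
  destruct (Rle_dec b c) as [Hbc|Hbc]; destruct (Rle_dec a c) as [Hac|Hac]; try lra.
  - rewrite abs_le in Ha, Hb by lra.
    rewrite !Rmax_pos by lra.
    replace (b - a) with ((r - (c - b)) - (r - (c - a))) by ring.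
    apply key; lra.
  - rewrite abs_le in Ha by lra. rewrite abs_ge in Hb by lra.
    rewrite !Rmax_pos by lra.
    pose proof (key m r (r - (c - a)) rho ltac:(lra) ltac:(lra)).
    pose proof (key m r (r - (b - c)) rho ltac:(lra) ltac:(lra)).
    replace ((b - a) * INR (S m) * rho ^ m) with
      ((r - (r - (c - a))) * INR (S m) * rho ^ m + (r - (r - (b - c))) * INR (S m) * rho ^ m) by ring.
    lra.
  - rewrite abs_ge in Ha, Hb by lra.
    rewrite !Rmax_pos by lra.
    replace (b - a) with ((r - (a - c)) - (r - (b - c))) by ring.
    pose proof (key m (r - (a - c)) (r - (b - c)) rho ltac:(lra) ltac:(lra)). lra.
Qed.

Lemma tent_slab_pp m c r a b rho : 0 <= r -> a <= b ->
  rho <= r - Rabs (a - c) -> rho <= r - Rabs (b - c) ->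
  (b - a) * INR (S m) * pp m rho <= psi m c r b - psi m c r a.
Proof.
  intros. unfold pp. destruct (Rle_dec 0 rho).
  - apply tent_slab; auto.
  - pose proof (psi_mono m c r a b H H0). lra.
Qed.

Definition Psi m cL rL cR rR p y :=
  if Rle_dec y p then psi m cL rL y else psi m cR rR y - psi m cR rR p + psi m cL rL p.

Lemma abs_between a p b c : a <= p <= b -> Rabs (p - c) <= Rmax (Rabs (a - c)) (Rabs (b - c)).
Proof.
  intros H. unfold Rmax. destruct (Rle_dec (Rabs (a - c)) (Rabs (b - c)));
  unfold Rabs in *; destruct (Rcase_abs (a - c)), (Rcase_abs (b - c)), (Rcase_abs (p - c)); lra.
Qed.

Lemma Psi_slab m cL rL cR rR p a b rho : 0 <= rL -> 0 <= rR -> a <= b ->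
  rho <= rL - Rabs (a - cL) -> rho <= rL - Rabs (b - cL) ->
  rho <= rR - Rabs (a - cR) -> rho <= rR - Rabs (b - cR) ->
  (b - a) * INR (S m) * pp m rho <= Psi m cL rL cR rR p b - Psi m cL rL cR rR p a.
Proof.
  intros HL HR Hab H1 H2 H3 H4. unfold Psi.
  destruct (Rle_dec b p), (Rle_dec a p); try lra.
  - apply tent_slab_pp; auto.
  - assert (Hp1 : rho <= rL - Rabs (p - cL)).
    { pose proof (abs_between a p b cL ltac:(lra)).
      unfold Rmax in H; destruct (Rle_dec (Rabs (a - cL)) (Rabs (b - cL))); lra. }
    assert (Hp2 : rho <= rR - Rabs (p - cR)).
    { pose proof (abs_between a p b cR ltac:(lra)).
      unfold Rmax in H; destruct (Rle_dec (Rabs (a - cR)) (Rabs (b - cR))); lra. }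
    pose proof (tent_slab_pp m cL rL a p rho HL ltac:(lra) H1 Hp1).
    pose proof (tent_slab_pp m cR rR p b rho HR ltac:(lra) Hp2 H4).
    replace ((b - a) * INR (S m) * pp m rho) with
      ((p - a) * INR (S m) * pp m rho + (b - p) * INR (S m) * pp m rho) by ring.
    lra.
  - pose proof (tent_slab_pp m cR rR a b rho HR Hab H3 H4). lra.
Qed.

Lemma Psi_bounds m cL rL cR rR p y : 0 <= rL -> 0 <= rR ->
  0 <= Psi m cL rL cR rR p y <= 2 * rR ^ S m - psi m cR rR p + psi m cL rL p.
Proof.
  intros HL HR. unfold Psi. destruct (Rle_dec y p).
  - pose proof (psi_bounds m cL rL y HL). pose proof (psi_mono m cL rL y p HL r).
    pose proof (psi_bounds m cR rR p HR). lra.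
  - pose proof (psi_bounds m cR rR y HR). pose proof (psi_mono m cR rR p y HR ltac:(lra)).
    pose proof (psi_bounds m cL rL p HL). lra.
Qed.

Definition ball_stmt (m : nat) : Prop := forall k (F : list (list Z)) (c : pt) r,
  NoDup F ->
  (forall z, In z F -> length z = m /\ forall x, dcube m k z x -> l1norm m (fun i => x i - c i) <= r) ->
  INR (length F) / 2 ^ (k * m) <= 2 ^ m * pp m r / INR (fact m).

Definition ext (y : R) (x : pt) : pt := fun i => match i with O => y | S j => x j end.

Lemma dcube_ext m k t z x y : dcube m k z x -> IZR t / 2 ^ k <= y <= (IZR t + 1) / 2 ^ k ->
  dcube (S m) k (t :: z) (ext y x).
Proof.
  intros Hx Hy i Hi. destruct i as [|i]; simpl; auto. apply Hx. lia.
Qed.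

Lemma l1norm_ext m y x (c : pt) :
  l1norm (S m) (fun i => ext y x i - c i) = Rabs (y - c 0%nat) + l1norm m (fun i => x i - c (S i)).
Proof. rewrite l1norm_S. reflexivity. Qed.

Lemma step m (IH : ball_stmt m) k (F : list (list Z)) (cL : pt) rL (cR : pt) rR p :
  0 <= rL -> 0 <= rR -> NoDup F ->
  (forall z, In z F -> length z = S m /\ forall x, dcube (S m) k z x ->
      l1norm (S m) (fun i => x i - cL i) <= rL /\ l1norm (S m) (fun i => x i - cR i) <= rR) ->
  INR (length F) / 2 ^ (k * S m) <=
  2 ^ m / INR (fact m) / INR (S m) * (2 * rR ^ S m - psi m (cR 0%nat) rR p + psi m (cL 0%nat) rL p).
Proof.
  intros HrL HrR HF Hcub.
  assert (Hk : 0 < 2 ^ k) by (apply pow_lt; lra).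
  assert (Hm : 0 < 2 ^ m) by (apply pow_lt; lra).
  assert (Hf : 0 < INR (fact m)) by (apply lt_0_INR, lt_O_fact).
  assert (HS : 0 < INR (S m)) by (apply lt_0_INR; lia).
  set (K := 2 ^ m / INR (fact m)).
  assert (HK : 0 < K) by (unfold K; apply Rdiv_lt_0_compat; lra).
  set (g := fun t : Z => K / INR (S m) * Psi m (cL 0%nat) rL (cR 0%nat) rR p (IZR t / 2 ^ k)).
  destruct (heads_range F) as [lo [N Hr]].
  apply Rle_trans with (g (lo + Z.of_nat N)%Z - g lo).
  { apply telescope; auto.
    intros t G HG HGF.
    set (a := IZR t / 2 ^ k). set (b := IZR (t + 1) / 2 ^ k).
    assert (Hb : b = (IZR t + 1) / 2 ^ k) by (unfold b; rewrite plus_IZR; reflexivity).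
    assert (Hab : b - a = / 2 ^ k) by (rewrite Hb; unfold a; field; lra).
    set (rhoL := rL - Rmax (Rabs (a - cL 0%nat)) (Rabs (b - cL 0%nat))).
    set (rhoR := rR - Rmax (Rabs (a - cR 0%nat)) (Rabs (b - cR 0%nat))).
    set (G' := map (@tl Z) G).
    assert (Htl : forall z', In z' G' -> length z' = m /\ forall x', dcube m k z' x' ->
       l1norm m (fun i => x' i - cL (S i)) <= rhoL /\ l1norm m (fun i => x' i - cR (S i)) <= rhoR).
    { intros z' Hz'. unfold G' in Hz'. apply in_map_iff in Hz' as [z [<- Hz]].
      destruct (HGF z Hz) as [HzF Hzt]. destruct (Hcub z HzF) as [Hlen Hin].
      destruct z as [|t0 z0]; [simpl in Hlen; lia|]. simpl in Hzt, Hlen |- *. subst t0.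
      split; [lia|]. intros x' Hx'.
      assert (HA := Hin (ext a x') (dcube_ext m k t z0 x' a Hx' ltac:(unfold a; split; [lra| apply Rmult_le_compat_r; [left; apply Rinv_0_lt_compat; lra| lra]]))).
      assert (HB := Hin (ext b x') (dcube_ext m k t z0 x' b Hx' ltac:(rewrite Hb; split; [apply Rmult_le_compat_r; [left; apply Rinv_0_lt_compat; lra| lra]| lra]))).
      rewrite !l1norm_ext in HA, HB. destruct HA as [HA1 HA2]. destruct HB as [HB1 HB2].
      set (l1L := l1norm m (fun i => x' i - cL (S i))) in *. set (l1R := l1norm m (fun i => x' i - cR (S i))) in *.
      unfold rhoL, rhoR, Rmax.
      destruct (Rle_dec (Rabs (a - cL 0%nat)) (Rabs (b - cL 0%nat)));
      destruct (Rle_dec (Rabs (a - cR 0%nat)) (Rabs (b - cR 0%nat))); split; lra. }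
    assert (HG' : NoDup G').
    { apply NoDup_map_NoDup_ForallPairs; auto.
      intros z1 z2 H1 H2 Heq.
      destruct (HGF z1 H1) as [H1F H1t]. destruct (HGF z2 H2) as [H2F H2t].
      destruct (Hcub z1 H1F) as [L1 _]. destruct (Hcub z2 H2F) as [L2 _].
      destruct z1 as [|u1 w1]; [simpl in L1; lia|]. destruct z2 as [|u2 w2]; [simpl in L2; lia|].
      simpl in *. subst. reflexivity. }
    assert (Hlen : length G' = length G) by (unfold G'; apply length_map).
    set (rho := Rmin rhoL rhoR).
    assert (Hcnt : INR (length G') / 2 ^ (k * m) <= 2 ^ m * pp m rho / INR (fact m)).
    { unfold rho, Rmin. destruct (Rle_dec rhoL rhoR).
      - apply (IH k G' (fun i => cL (S i)) rhoL HG'). intros z' Hz'. destruct (Htl z' Hz') as [L H].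
        split; auto. intros x' Hx'. apply H; auto.
      - apply (IH k G' (fun i => cR (S i)) rhoR HG'). intros z' Hz'. destruct (Htl z' Hz') as [L H].
        split; auto. intros x' Hx'. apply H; auto. }
    assert (Hik : 0 < / 2 ^ k) by (apply Rinv_0_lt_compat; lra).
    assert (Hsl' : (b - a) * INR (S m) * pp m rho <=
       Psi m (cL 0%nat) rL (cR 0%nat) rR p b - Psi m (cL 0%nat) rL (cR 0%nat) rR p a).
    { assert (R1 : rho <= rhoL) by apply Rmin_l. assert (R2 : rho <= rhoR) by apply Rmin_r.
      pose proof (Rmax_l (Rabs (a - cL 0%nat)) (Rabs (b - cL 0%nat))).
      pose proof (Rmax_r (Rabs (a - cL 0%nat)) (Rabs (b - cL 0%nat))).
      pose proof (Rmax_l (Rabs (a - cR 0%nat)) (Rabs (b - cR 0%nat))).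
      pose proof (Rmax_r (Rabs (a - cR 0%nat)) (Rabs (b - cR 0%nat))).
      unfold rhoL, rhoR in *.
      apply Psi_slab; auto; lra. }
    unfold g. fold a b.
    rewrite <- Hlen. rewrite Nat.mul_succ_r, pow_add.
    assert (Hkm : 0 < 2 ^ (k * m)) by (apply pow_lt; lra).
    replace (INR (length G') / (2 ^ (k * m) * 2 ^ k)) with (INR (length G') / 2 ^ (k * m) * / 2 ^ k)
      by (field; lra).
    replace (2 ^ m * pp m rho / INR (fact m)) with (K * pp m rho) in Hcnt by (unfold K; field; lra).
    rewrite Hab in Hsl'.
    apply Rle_trans with (K * pp m rho * / 2 ^ k).
    { apply Rmult_le_compat_r; lra. }
    replace (K * pp m rho * / 2 ^ k) with (K / INR (S m) * (/ 2 ^ k * INR (S m) * pp m rho)) by (field; lra).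
    rewrite <- Rmult_minus_distr_l.
    apply Rmult_le_compat_l; [|lra]. apply Rlt_le, Rdiv_lt_0_compat; lra. }
  unfold g.
  pose proof (Psi_bounds m (cL 0%nat) rL (cR 0%nat) rR p (IZR (lo + Z.of_nat N) / 2 ^ k) HrL HrR).
  pose proof (Psi_bounds m (cL 0%nat) rL (cR 0%nat) rR p (IZR lo / 2 ^ k) HrL HrR).
  assert (0 < K / INR (S m)) by (apply Rdiv_lt_0_compat; lra).
  fold K. unfold Rdiv at 2. rewrite <- Rmult_minus_distr_l.
  apply Rmult_le_compat_l; lra.
Qed.

Lemma corner_in m k z : dcube m k z (fun i => IZR (nth i z 0%Z) / 2 ^ k).
Proof.
  intros i Hi. assert (0 < 2 ^ k) by (apply pow_lt; lra). split; [lra|].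
  apply Rmult_le_compat_r; [left; apply Rinv_0_lt_compat; lra| lra].
Qed.

Lemma pp_nonneg m x : 0 <= pp m x.
Proof. unfold pp. destruct (Rle_dec 0 x); [apply pow_le; auto| lra]. Qed.

Lemma r_nonneg m k (F : list (list Z)) (c : pt) r z : In z F ->
  (forall z, In z F -> length z = m /\ forall x, dcube m k z x -> l1norm m (fun i => x i - c i) <= r) ->
  0 <= r.
Proof.
  intros Hz Hc. destruct (Hc z Hz) as [_ H]. pose proof (H _ (corner_in m k z)).
  pose proof (l1norm_nonneg m (fun i => IZR (nth i z 0%Z) / 2 ^ k - c i)). lra.
Qed.

Lemma ball0 : ball_stmt 0.
Proof.
  intros k F c r HF Hc. simpl. rewrite Nat.mul_0_r. simpl.
  destruct F as [|z F].
  + simpl. pose proof (pp_nonneg 0 r). lra.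
  + destruct (Hc z (or_introl eq_refl)) as [Hl Hz].
    pose proof (r_nonneg 0 k (z :: F) c r z (or_introl eq_refl) Hc) as H0.
    destruct F as [|w F].
    * unfold pp. destruct (Rle_dec 0 r); [simpl; right; field | lra].
    * destruct (Hc w (or_intror (or_introl eq_refl))) as [Hw _].
      destruct z; [|simpl in Hl; lia]. destruct w; [|simpl in Hw; lia].
      exfalso. inversion HF. match goal with H : ~ In _ _ |- _ => apply H; left; reflexivity end.
Qed.

Lemma ball_count m : ball_stmt m.
Proof.
  induction m as [|m IHm]; [exact ball0|].
  intros k F c r HF Hc.
  destruct F as [|z F'].
  { change (INR (length (@nil (list Z)))) with 0. unfold Rdiv. rewrite Rmult_0_l.
    pose proof (pp_nonneg (S m) r). assert (0 < 2 ^ S m) by (apply pow_lt; lra).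
    assert (0 < INR (fact (S m))) by (apply lt_0_INR, lt_O_fact).
    apply Rmult_le_pos; [apply Rmult_le_pos; lra| left; apply Rinv_0_lt_compat; lra]. }
  set (F := z :: F') in *.
  pose proof (r_nonneg (S m) k F c r z (or_introl eq_refl) Hc) as Hr.
  pose proof (step m IHm k F c r c r 0 Hr Hr HF) as H.
  eapply Rle_trans; [apply H|].
  { intros w Hw. destruct (Hc w Hw) as [L Hx]. split; auto. }
  unfold pp. destruct (Rle_dec 0 r); [|lra].
  rewrite fact_simpl, mult_INR.
  assert (0 < INR (fact m)) by (apply lt_0_INR, lt_O_fact).
  assert (0 < INR (S m)) by (apply lt_0_INR; lia).
  simpl (2 ^ S m). right. field. lra.
Qed.

Lemma bernoulli n x : 0 <= x -> 1 + INR n * x <= (1 + x) ^ n.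
Proof.
  intros Hx. induction n as [|n IH]; [simpl; lra|].
  rewrite S_INR. simpl. assert (0 <= INR n) by apply pos_INR.
  assert (0 <= INR n * x * x) by (apply Rmult_le_pos; [apply Rmult_le_pos|]; lra).
  assert ((1 + x) * (1 + INR n * x) <= (1 + x) * (1 + x) ^ n) by (apply Rmult_le_compat_l; lra).
  nra.
Qed.

Lemma shrink n x : 0 <= x <= 1 -> (1 - x) ^ n * (1 + INR n * x) <= 1.
Proof.
  intros Hx. pose proof (bernoulli n x ltac:(lra)).
  assert (0 <= (1 - x) ^ n) by (apply pow_le; lra).
  apply Rle_trans with ((1 - x) ^ n * (1 + x) ^ n).
  { apply Rmult_le_compat_l; lra. }
  rewrite <- Rpow_mult_distr. apply Rle_trans with (1 ^ n); [apply pow_incr; nra | rewrite pow1; lra].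
Qed.

Theorem mainTheorem12 (n : nat) (a : nat -> nat) (beta eps c2 Z V : R) :
  (exists i, (i < n)%nat /\ a i <> 0%nat) ->
  (forall i j, (i <= j)%nat -> (j < n)%nat -> (a j <= a i)%nat) ->
  0 < beta < 1 -> 0 < eps -> 0 < c2 -> 0 < c2 * eps < 1 ->
  1 - beta >= c2 * eps / (INR n * l1norm n (fun i => INR (a i))) ->
  is_volume n (fun x => Q n a beta 0 x /\ Q n a beta 1 x) V ->
  V <= Z <= (1 + c2 * eps ^ 2 / (2 * INR n)) * V ->
  (1 - eps) * (2 ^ n / INR (fact n) - V) <= 2 ^ n / INR (fact n) - Z
  <= 2 ^ n / INR (fact n) - V.
Proof.
  rename Z into Zv. intros [i0 [Hi0 Hai0]] Hsort Hb Heps Hc2 Hce Hbeta [Hub Hlub] [HZ1 HZ2].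
  destruct n as [|m]; [lia|].
  set (n := S m) in *.
  assert (Hn : 0 < INR n) by (apply lt_0_INR; unfold n; lia).
  set (W := 2 ^ n / INR (fact n)).
  assert (HW : 0 < W) by (unfold W; apply Rdiv_lt_0_compat; [apply pow_lt; lra| apply lt_0_INR, lt_O_fact]).
  set (a0 := INR (a 0%nat)).
  assert (Ha0 : 1 <= a0).
  { unfold a0. assert (a i0 <= a 0%nat)%nat by (apply Hsort; lia).
    change 1 with (INR 1). apply le_INR. lia. }
  set (nrm := l1norm n (fun i => INR (a i))) in *.
  assert (Hnrm1 : nrm <= INR n * a0).
  { unfold nrm, l1norm. apply rsum_le_const. intros i Hi. rewrite Rabs_pos_eq by apply pos_INR.
    apply le_INR. apply Hsort; lia. }
  assert (Hnrm2 : a0 <= nrm).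
  { unfold nrm, l1norm, a0. rewrite <- (Rabs_pos_eq (INR (a 0%nat))) at 1 by apply pos_INR.
    apply (rsum_ge_term n (fun i => Rabs (INR (a i))) 0%nat). intros; apply Rabs_pos. unfold n; lia. }
  set (delta := c2 * eps / (2 * INR n)).
  set (x := delta / INR n).
  assert (Hd : 0 < delta) by (unfold delta; apply Rdiv_lt_0_compat; lra).
  assert (Hx0 : 0 < x) by (unfold x; apply Rdiv_lt_0_compat; lra).
  assert (Hnx : INR n * x = delta) by (unfold x; field; lra).
  assert (Hn1 : 1 <= INR n) by (unfold n; rewrite S_INR; pose proof (pos_INR m); lra).
  assert (Hx2 : x * (2 * INR n * INR n) = c2 * eps) by (unfold x, delta; field; lra).
  assert (Hnn : INR n * INR n >= 1) by nra.
  assert (Hx1 : x <= 1) by nra.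
  assert (Hq : 2 * x <= (1 - beta) * a0).
  { set (D := INR n * nrm) in *.
    assert (HD : 0 < D) by (unfold D; apply Rmult_lt_0_compat; lra).
    assert (E : c2 * eps / D * D = c2 * eps) by (field; lra).
    assert (HA : c2 * eps <= (1 - beta) * D).
    { rewrite <- E. apply Rmult_le_compat_r; lra. }
    assert (HB : (1 - beta) * D <= (1 - beta) * (INR n * (INR n * a0))).
    { unfold D. apply Rmult_le_compat_l; [lra|]. apply Rmult_le_compat_l; lra. }
    assert (HC : ((1 - beta) * a0 - 2 * x) * (INR n * INR n) >= 0).
    { replace (((1 - beta) * a0 - 2 * x) * (INR n * INR n)) with
        ((1 - beta) * (INR n * (INR n * a0)) - x * (2 * INR n * INR n)) by ring. lra. }
    destruct (Rlt_le_dec ((1 - beta) * a0) (2 * x)); [exfalso; nra| lra]. }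
  set (q := 1 - (1 - beta) * (1 + a0) / 2).
  set (Qv := Rmax q 0).
  assert (HQ : 0 <= Qv <= 1 - x).
  { unfold Qv. split; [apply Rmax_r|]. apply Rmax_lub; [unfold q|]; lra. }
  assert (HP : Qv ^ n * (1 + delta) <= 1).
  { apply Rle_trans with ((1 - x) ^ n * (1 + delta)).
    - apply Rmult_le_compat_r; [lra|]. apply pow_incr. lra.
    - rewrite <- Hnx. apply shrink. lra. }
  assert (HV0 : 0 <= V).
  { apply Hub. exists 0%nat, nil. split; [constructor|]. split; [intros z []|].
    simpl. unfold Rdiv. ring. }
  assert (HVW : V <= W * Qv ^ n).
  { apply Hlub. intros v [k [F [HF [Hcub ->]]]].
    set (cL := fun i => (1 - beta ^ 1) * INR (a i)).
    set (cR := fun i => (1 - beta ^ 0) * INR (a i)).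
    set (p := (1 - beta + (1 - beta) * a0) / 2).
    assert (H := step m (ball_count m) k F cL (beta ^ 1) cR (beta ^ 0) p
                   ltac:(rewrite pow_1; lra) ltac:(rewrite pow_O; lra) HF).
    eapply Rle_trans; [apply H|].
    { intros z Hz. destruct (Hcub z Hz) as [L Hin]. split; auto.
      intros y Hy. destruct (Hin y Hy) as [H0 H1]. split; [exact H1 | exact H0]. }
    assert (E1 : psi m (cR 0%nat) (beta ^ 0) p = 2 - Qv ^ S m).
    { unfold psi, cR. rewrite pow_O. fold a0. destruct (Rle_dec p ((1 - 1) * a0)).
      - exfalso. unfold p in r. nra.
      - replace (1 - (p - (1 - 1) * a0)) with q by (unfold p, q; field). rewrite pow1. fold Qv. ring. }
    assert (E2 : psi m (cL 0%nat) (beta ^ 1) p = Qv ^ S m).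
    { unfold psi, cL. rewrite pow_1. fold a0. destruct (Rle_dec p ((1 - beta) * a0)).
      - replace (beta - ((1 - beta) * a0 - p)) with q by (unfold p, q; field). fold Qv. ring.
      - exfalso. apply n0. unfold p. nra. }
    rewrite E1, E2, pow_O, pow1.
    unfold W, n. rewrite fact_simpl, mult_INR.
    assert (0 < INR (fact m)) by (apply lt_0_INR, lt_O_fact).
    assert (0 < INR (S m)) by (apply lt_0_INR; lia).
    rewrite <- (tech_pow_Rmult 2 m). right. field. lra. }
  replace (c2 * eps ^ 2 / (2 * INR n)) with (eps * delta) in HZ2 by (unfold delta; field; lra).
  assert (H1 : V * (1 + delta) <= W).
  { apply Rle_trans with (W * Qv ^ n * (1 + delta)).
    - apply Rmult_le_compat_r; lra.
    - rewrite Rmult_assoc. rewrite <- (Rmult_1_r W) at 2. apply Rmult_le_compat_l; lra. }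
  assert (H2 : eps * (delta * V) <= eps * (W - V)) by (apply Rmult_le_compat_l; lra).
  fold W. split; nra.
Qed.
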